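(* Let $L$ be an indexed language with threshold $l$, let $w\in L$ with a set of at least $l$ marked positions, and let $u_i$, $v_{i,j}$, $I$, $\phi$ be any factorization and map satisfying properties (1)–(4) of the threshold definition. Then for every $t\ge0$, the word $w^{(t)}$ has at least $t$ marked positions.
   Context: Indexed languages are the languages generated by indexed grammars (grammars whose nonterminals carry stacks of symbols that can be pushed, popped and copied to all nonterminals produced by a rule). An integer $l\ge0$ is a threshold for a language $L$ if for every $w\in L$ with a set of at least $l$ marked positions there are: (1) a factorization $w=u_1\cdots u_n$, $u_i=v_{i,1}\cdots v_{i,n_i}$, with $I=\{(i,j):1\le i\le n,1\le j\le n_i\}$; (2) a map $\phi:I\to\{1,\dots,n\}$ with $w^{(t)}\in L$ for all $t\ge0$, where $v^{(0)}_{i,j}=v_{i,j}$, $u_i^{(t)}=v_{i,1}^{(t)}\cdots v_{i,n_i}^{(t)}$, $v_{i,j}^{(t+1)}=u^{(t)}_{\phi(i,j)}$, $w^{(t)}=u_1^{(t)}\cdots u_n^{(t)}$; (3) if $v_{i,j}$ contains a marked position then so does $u_{\phi(i,j)}$; (4) some $(\mathbf i,\mathbf j)\in I$ has $\phi(\mathbf i,\mathbf j)=\mathbf i$ and $u_{\mathbf i}$ has a marked position outside $v_{\mathbf i,\mathbf j}$. (Every indexed language has a threshold.) Marked positions of $w^{(t)}$: introduce a symbol $x_{i,j}$ for each $(i,j)\in I$, the morphism $h(x_{i,j})=x_{\phi(i,j),1}\cdots x_{\phi(i,j),n_{\phi(i,j)}}$ and $X=x_{1,1}\cdots x_{1,n_1}\cdots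 x_{n,1}\cdots x_{n,n_n}$; then $w^{(t)}$ is obtained from $h^t(X)$ by replacing each occurrence of $x_{i,j}$ by a copy of $v_{i,j}$, and a position of $w^{(t)}$ is marked iff it lies in such a copy of some $v_{i,j}$ at a position corresponding to a marked position of $w$ inside $v_{i,j}$. *)

(* Defs.v *)
From Stdlib Require Import Relations List.
From mathcomp Require Import all_boot.

Set Implicit Arguments.
Unset Strict Implicit.
Unset Printing Implicit Defensive.

(* Indexed grammars (Aho 1968), normal form with three kinds of rules:  *)
(*   A -> alpha      (stack of A copied to every nonterminal of alpha)  *)
(*   A -> B f        (push flag f)                                      *)
(*   A f -> alpha    (pop f, rest of stack copied to nonterminals)      *)

Inductive isym (N T : Type) := ITerm of T | INont of N.

Inductive irule (N F T : Type) :=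
| RCopy of N & seq (isym N T)
| RPush of N & N & F
| RPop  of N & F & seq (isym N T).

Record indexed_grammar (N F T : Type) := IndexedGrammar {
  ig_start : N;
  ig_rules : seq (irule N F T)
}.

Inductive item (N F T : Type) := ItTerm of T | ItNont of N & seq F.

Definition inst (N F T : Type) (st : seq F) (rhs : seq (isym N T))
  : seq (item N F T) :=
  map (fun s => match s with
                | ITerm a => ItTerm N F a
                | INont B => ItNont T B st
                end) rhs.

Inductive istep (N F T : Type) (G : indexed_grammar N F T)
  : seq (item N F T) -> seq (item N F T) -> Prop :=
| step_copy x y A st rhs :
    List.In (RCopy F A rhs) (ig_rules G) ->
    istep G (x ++ ItNont T A st :: y) (x ++ inst st rhs ++ y)
| step_push x y A B f st :
    List.In (RPush T A B f) (ig_rules G) ->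
    istep G (x ++ ItNont T A st :: y) (x ++ ItNont T B (f :: st) :: y)
| step_pop x y A f st rhs :
    List.In (RPop A f rhs) (ig_rules G) ->
    istep G (x ++ ItNont T A (f :: st) :: y) (x ++ inst st rhs ++ y).

Definition iderives (N F T : Type) (G : indexed_grammar N F T) :=
  clos_refl_trans _ (istep G).

Definition ig_language (N F T : Type) (G : indexed_grammar N F T)
  (w : seq T) : Prop :=
  iderives G [:: ItNont T (ig_start G) [::]] (map (@ItTerm N F T) w).

Definition indexed_language (T : finType) (L : seq T -> Prop) : Prop :=
  exists (N F : finType) (G : indexed_grammar N F T),
    forall w, L w <-> ig_language G w.

(* Marked words: a word together with its set of marked positions is   *)
(* encoded as a sequence of pairs (letter, is_marked).                 *)
(* Factorization: vs = [:: [:: v_{1,1}; ..; v_{1,n_1}]; ..]            *)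
(* (0-based indices), u_i = flatten (vs_i), phi : nat -> nat -> nat.   *)

Section Iter.
Variable T : Type.
Notation mword := (seq (T * bool)).
Variables (vs : seq (seq mword)) (phi : nat -> nat -> nat).

Definition nfac := size vs.
Definition nsub i := size (nth [::] vs i).
Definition vfac i j : mword := nth [::] (nth [::] vs i) j.
Definition ufac i : mword := flatten (nth [::] vs i).
Definition inI i j := (i < nfac) && (j < nsub i).

Fixpoint uiter (t : nat) : seq mword :=
  match t with
  | 0 => map (@flatten _) vs
  | t'.+1 => [seq flatten [seq nth [::] (uiter t') (phi i j)
                          | j <- iota 0 (nsub i)]
             | i <- iota 0 nfac]
  end.

Definition witer (t : nat) : mword := flatten (uiter t).

(* the morphism h on the symbols x_{i,j} = (i,j) *)
Definition hsym (p : nat * nat) : seq (nat * nat) :=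
  [seq (phi p.1 p.2, k) | k <- iota 0 (nsub (phi p.1 p.2))].
Definition hmorph (s : seq (nat * nat)) : seq (nat * nat) :=
  flatten (map hsym s).
Definition Xword : seq (nat * nat) :=
  flatten [seq [seq (i, k) | k <- iota 0 (nsub i)] | i <- iota 0 nfac].

(* w^{(t)} with its marked positions: h^t(X) with each x_{i,j} replaced
   by a copy of v_{i,j} (carrying its marks). *)
Definition wmarked (t : nat) : mword :=
  flatten [seq vfac p.1 p.2 | p <- iter t hmorph Xword].

Definition nmarked (x : mword) : nat := count snd x.
Definition has_mark (x : mword) : bool := has snd x.

Definition threshold_factorization (L : seq T -> Prop) (w : mword) : Prop :=
  [/\ (* (1) *) w = flatten (map (@flatten _) vs),
      (* (2) *) (forall i j, inI i j -> phi i j < nfac) /\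
                (forall t, L (map fst (witer t))),
      (* (3) *) (forall i j, inI i j -> has_mark (vfac i j) ->
                   has_mark (ufac (phi i j)))
    & (* (4) *) exists i j, [/\ inI i j, phi i j = i &
                   has_mark (flatten (take j (nth [::] vs i))) ||
                   has_mark (flatten (drop j.+1 (nth [::] vs i)))]].
End Iter.

Definition is_threshold (T : Type) (L : seq T -> Prop) (l : nat) : Prop :=
  forall w : seq (T * bool), l <= nmarked w ->
    exists vs phi, threshold_factorization vs phi L w.

(* Main.v *)
Require Import Defs.
From mathcomp Require Import all_boot.

Section Proof.
Variables (T : Type) (vs : seq (seq (seq (T * bool)))) (phi : nat -> nat -> nat).

Definition Mk (s : seq (nat * nat)) := nmarked (flatten [seq vfac vs p.1 p.2 | p <- s]).

Lemma Mk_cat s1 s2 : Mk (s1 ++ s2) = Mk s1 + Mk s2.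
Proof. by rewrite /Mk map_cat flatten_cat /nmarked count_cat. Qed.

Lemma Mk_flatten ss : Mk (flatten ss) = sumn (map Mk ss).
Proof. elim: ss => [|s ss IH] //=; by rewrite Mk_cat IH. Qed.

Lemma hmorph_cat s1 s2 : hmorph vs phi (s1 ++ s2) = hmorph vs phi s1 ++ hmorph vs phi s2.
Proof. by rewrite /hmorph map_cat flatten_cat. Qed.

Lemma iterh_cat t s1 s2 : iter t (hmorph vs phi) (s1 ++ s2) =
  iter t (hmorph vs phi) s1 ++ iter t (hmorph vs phi) s2.
Proof. elim: t => [|t IH] //=; by rewrite IH hmorph_cat. Qed.

Lemma iterh_flatten t ss : iter t (hmorph vs phi) (flatten ss) =
  flatten (map (iter t (hmorph vs phi)) ss).
Proof.
elim: ss => [|s ss IH] /=; first by elim: t => //= t ->.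
by rewrite iterh_cat IH.
Qed.

Definition R i := [seq (i, k) | k <- iota 0 (nsub vs i)].
Definition F t i : nat := Mk (iter t (hmorph vs phi) (R i)).

Lemma FS t i : F t.+1 i = sumn [seq F t (phi i k) | k <- iota 0 (nsub vs i)].
Proof.
rewrite /F iterSr.
have -> : hmorph vs phi (R i) = flatten [seq R (phi i k) | k <- iota 0 (nsub vs i)].
  by rewrite /hmorph /R -map_comp.
by rewrite iterh_flatten Mk_flatten -!map_comp.
Qed.

Lemma F0 i : F 0 i = sumn [seq nmarked (vfac vs i k) | k <- iota 0 (nsub vs i)].
Proof.
by rewrite /F /= /Mk /R -map_comp /nmarked count_flatten -map_comp.
Qed.

Lemma F0u i : F 0 i = nmarked (ufac vs i).
Proof.
rewrite F0 /ufac /nmarked count_flatten /vfac /nsub.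
rewrite -[in RHS](take_size (nth [::] vs i)) -(map_nth_iota0 [::] (leqnn _)).
by rewrite -map_comp.
Qed.

Lemma sumn_pos_ex (l : seq nat) (f : nat -> nat) :
  0 < sumn (map f l) -> exists2 k, k \in l & 0 < f k.
Proof.
elim: l => [|x l IH] //=.
case: (posnP (f x)) => [->|Hx] /=.
  by move/IH => [k Hk Hk']; exists k => //; rewrite inE Hk orbT.
by move=> _; exists x => //; rewrite inE eqxx.
Qed.

Lemma sumn_ge (l : seq nat) (f : nat -> nat) x :
  x \in l -> f x <= sumn (map f l).
Proof.
elim: l => [|y l IH] //=; rewrite inE => /orP [/eqP ->|Hx].
  exact: leq_addr.
by apply: leq_trans (IH Hx) (leq_addl _ _).
Qed.

Lemma sumn_pos (l : seq nat) (f : nat -> nat) :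
  (exists2 k, k \in l & 0 < f k) -> 0 < sumn (map f l).
Proof. move=> [k Hk Hf]; exact: (leq_trans Hf (@sumn_ge _ f _ Hk)). Qed.

Hypothesis H3 : forall i j, inI vs i j -> has_mark (vfac vs i j) ->
                   has_mark (ufac vs (phi i j)).

Lemma hm_pos (x : seq (T * bool)) : has_mark x -> 0 < nmarked x.
Proof. by rewrite /has_mark /nmarked has_count. Qed.

Lemma nsub_nfac i k : k < nsub vs i -> i < nfac vs.
Proof.
rewrite /nsub /nfac; case: (ltnP i (size vs)) => // Hi.
by rewrite nth_default.
Qed.

Lemma persist t i : 0 < F 0 i -> 0 < F t i.
Proof.
elim: t i => [|t IH] i // Hi.
rewrite FS; apply: sumn_pos.
rewrite F0 in Hi; case: (@sumn_pos_ex _ _ Hi) => k Hk Hm.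
exists k => //; apply: IH; rewrite F0u; apply: hm_pos; apply: H3.
  rewrite mem_iota in Hk; rewrite /inI.
  by move: Hk => /andP [_]; rewrite add0n => Hk; rewrite (nsub_nfac _ _ Hk) Hk.
by move: Hm; rewrite /nmarked /has_mark has_count.
Qed.

Lemma has_flatten' (U : Type) (a : pred U) (ss : seq (seq U)) :
  has a (flatten ss) = has (has a) ss.
Proof. by elim: ss => //= s ss IH; rewrite has_cat IH. Qed.

Lemma grow t i j : inI vs i j -> phi i j = i ->
   has_mark (flatten (take j (nth [::] vs i))) ||
   has_mark (flatten (drop j.+1 (nth [::] vs i))) ->
   (F t i).+1 <= F t.+1 i.
Proof.
move=> HI Hphi Hm.
move: (HI); rewrite /inI => /andP [Hi Hj].
set n := nsub vs i in Hj *.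
have Hrow : nth [::] vs i = [seq vfac vs i k | k <- iota 0 n].
  by rewrite /vfac /n /nsub map_nth_iota0 // take_size.
have Hs : iota 0 n = take j (iota 0 n) ++ j :: drop j.+1 (iota 0 n).
  by rewrite -{1}(cat_take_drop j (iota 0 n)) (drop_nth 0) ?size_iota // nth_iota.
have key : forall l, (forall k, k \in l -> k < n) ->
    has (fun v => has_mark v) [seq vfac vs i k | k <- l] ->
    0 < sumn [seq F t (phi i k) | k <- l].
  move=> l Hl; rewrite has_map => /hasP [k Hk Hv].
  apply: sumn_pos; exists k => //; apply: persist; rewrite F0u.
  by apply: hm_pos; apply: H3 => //; rewrite /inI Hi Hl.
rewrite FS Hs map_cat sumn_cat /= Hphi.
have Hin : forall k, k \in iota 0 n -> k < n by move=> k; rewrite mem_iota.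
move: Hm; rewrite Hrow -map_take -map_drop /has_mark !has_flatten' => /orP [Hm|Hm].
  have := key _ (fun k Hk => Hin k (mem_take Hk)) Hm.
  case: (sumn _) => // a _; rewrite addSn ltnS addnCA; exact: leq_addr.
have := key _ (fun k Hk => Hin k (mem_drop Hk)) Hm.
case: (sumn [seq F t (phi i k) | k <- drop j.+1 _]) => // a _.
by rewrite !addnS ltnS addnCA; exact: leq_addr.
Qed.

End Proof.

Theorem lemma2 (T : finType) (L : seq T -> Prop) (l : nat)
  (HL : indexed_language L) (Hl : is_threshold L l)
  (w : seq (T * bool)) (Hw : l <= nmarked w)
  (vs : seq (seq (seq (T * bool)))) (phi : nat -> nat -> nat)
  (Hf : threshold_factorization vs phi L w) :
  forall t : nat, t <= nmarked (wmarked vs phi t).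
Proof.
case: Hf => _ _ H3 [i [j [HI Hphi Hm]]] t.
have Ht : t <= @F _ vs phi t i.
  elim: t => [|t IH] //; apply: leq_trans (@grow _ _ _ H3 t _ _ HI Hphi Hm); by rewrite ltnS.
apply: (leq_trans Ht).
have -> : nmarked (wmarked vs phi t) = @Mk _ vs (iter t (hmorph vs phi) (Xword vs)) by [].
rewrite /Xword.
have -> : [seq [seq (i0, k) | k <- iota 0 (nsub vs i0)] | i0 <- iota 0 (nfac vs)]
   = map (@R _ vs) (iota 0 (nfac vs)) by [].
rewrite iterh_flatten Mk_flatten -map_comp -map_comp.
apply: (@sumn_ge _ (@F _ vs phi t)).
move: HI; rewrite /inI => /andP [Hi _]; by rewrite mem_iota.
Qed.
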